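(* Let $X$ be a compact metric space with metric $d$, let $f\colon X\to X$ be a continuous map with the s-limit shadowing property, let $C\in\mathcal{C}(f)$ and $D\in\mathcal{D}(C)$, and let $\mathcal{F},\mathcal{G}$ be full Furstenberg families. Let $n\ge2$ and $\delta>0$. If there is an $(\mathcal{F},\mathcal{G})$-$\delta$-scrambled $n$-tuple $(a_1,\dots,a_n)\in[V^s(D)]^n$ for $f$, then for every $0<r<\delta$, $V^s(D)$ is dense $(\mathcal{F},\mathcal{G})$-$n$-$r$-chaotic for $f$.
   Context: A $\delta$-chain of $f$ ($\delta>0$) is a finite sequence $(x_i)_{i=0}^k$, $k\ge1$, with $d(f(x_i),x_{i+1})\le\delta$ for $0\le i\le k-1$; it is a $\delta$-cycle if $x_0=x_k$, with length $k$. Write $x\to y$ if for every $\delta>0$ there is a $\delta$-chain from $x$ to $y$. Let $CR(f)=\{x\colon x\to x\}$; on $CR(f)$ let $x\leftrightarrow y$ iff $x\to y$ and $y\to x$; its classes are the chain components, forming $\mathcal{C}(f)$. For $C\in\mathcal{C}(f)$, $\delta>0$, let $m=m(C,\delta)$ be the gcd of the lengths of all $\delta$-cycles of $f|_C$, and for $x,y\in C$ let $x\sim_{C,\delta}y$ iff there is a $\delta$-chain of $f|_C$ from $x$ to $y$ of length divisible by $m$; $\mathcal{D}(C,\delta)$ is the set of its equivalence classes. Let $x\sim_C y$ iff $x\sim_{C,\delta}y$ for all $\delta>0$; $\mathcal{D}(C)$ is its set of classes. For $D\in\mathcal{D}(C)$, $D_\delta$ is the element of $\mathcal{D}(C,\delta)$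 containing $D$. $W^s(C)=\{x\colon\lim_i d(f^i(x),C)=0\}$ and $V^s(D)=\bigcap_{\delta>0}\{x\in W^s(C)\colon\lim_i d(f^i(x),f^i(D_\delta))=0\}$. $f$ has the s-limit shadowing property if for every $\epsilon>0$ there is $\delta>0$ such that for every sequence $(x_i)_{i\ge0}$ with $d(f(x_i),x_{i+1})\le\delta$ for all $i$ and $d(f(x_i),x_{i+1})\to0$ there is $x\in X$ with $d(f^i(x),x_i)\le\epsilon$ for all $i$ and $d(f^i(x),x_i)\to0$. A Furstenberg family is a nonempty proper family $\mathcal{F}\subsetneq 2^{\mathbb{N}_0}$ closed under taking supersets; it is full if $\{i\in A\colon i\ge n\}\in\mathcal{F}$ for all $A\in\mathcal{F}$, $n\ge0$. For $x_1,\dots,x_n\in X$, $r>0$: $S_f(x_1,\dots,x_n;r)=\{i\in\mathbb{N}_0\colon\min_{j<k}d(f^i(x_j),f^i(x_k))>r\}$ and $T_f(x_1,\dots,x_n;r)=\{i\in\mathbb{N}_0\colon\max_{j<k}d(f^i(x_j),f^i(x_k))<r\}$. $(x_1,\dots,x_n)$ is $(\mathcal{F},\mathcal{G})$-$\delta$-scrambled for $f$ if $S_f(x_1,\dots,x_n;\delta)\in\mathcal{F}$ and $T_f(x_1,\dots,x_n;\epsilon)\in\mathcal{G}$ for all $\epsilon>0$. A nonempty $Y\subset X$ is dense $(\mathcal{F},\mathcal{G})$-$n$-$\delta$-chaotic for $f$ if the set of $(\mathcal{F},\mathcal{G})$-$\delta$-scrambled $n$-tuples in $Y^n$ is dense in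 $Y^n$. *)

(* Defs.v *)
From Stdlib Require Import Reals Lra Lia List.
Open Scope R_scope.

Section Defs.
Context {X : Type} (d : X -> X -> R).

Definition is_metric : Prop :=
  (forall x y, 0 <= d x y) /\ (forall x y, d x y = 0 <-> x = y) /\
  (forall x y, d x y = d y x) /\ (forall x y z, d x z <= d x y + d y z).

Definition open_set (U : X -> Prop) : Prop :=
  forall x, U x -> exists e, 0 < e /\ forall y, d x y < e -> U y.

Definition compact_space : Prop :=
  forall (I : Type) (U : I -> X -> Prop),
    (forall i, open_set (U i)) -> (forall x, exists i, U i x) ->
    exists l : list I, forall x, exists i, In i l /\ U i x.

Definition continuous_map (f : X -> X) : Prop :=
  forall x e, 0 < e -> exists r, 0 < r /\ forall y, d x y < r -> d (f x) (f y) < e.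

Variable f : X -> X.

Definition iter (i : nat) (x : X) : X := Nat.iter i f x.

Definition chain_in (A : X -> Prop) (delta : R) (x : nat -> X) (k : nat) : Prop :=
  (1 <= k)%nat /\ (forall i, (i <= k)%nat -> A (x i)) /\
  (forall i, (i < k)%nat -> d (f (x i)) (x (S i)) <= delta).

Definition allX : X -> Prop := fun _ => True.

Definition chain_rel (a b : X) : Prop :=
  forall delta, 0 < delta -> exists x k, chain_in allX delta x k /\ x O = a /\ x k = b.

Definition CR (x : X) : Prop := chain_rel x x.

Definition chain_equiv (x y : X) : Prop := CR x /\ CR y /\ chain_rel x y /\ chain_rel y x.

(* C is an element of C(f): an equivalence class of <-> on CR(f) *)
Definition chain_component (C : X -> Prop) : Prop :=
  exists x0, CR x0 /\ forall y, C y <-> chain_equiv x0 y.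

Definition cycle_length (C : X -> Prop) (delta : R) (k : nat) : Prop :=
  exists x, chain_in C delta x k /\ x O = x k.

Definition is_gcd_set (S : nat -> Prop) (m : nat) : Prop :=
  (forall k, S k -> Nat.divide m k) /\
  (forall m', (forall k, S k -> Nat.divide m' k) -> Nat.divide m' m).

Definition sim_Cd (C : X -> Prop) (delta : R) (x y : X) : Prop :=
  exists m, is_gcd_set (cycle_length C delta) m /\
  exists z k, chain_in C delta z k /\ z O = x /\ z k = y /\ Nat.divide m k.

Definition sim_C (C : X -> Prop) (x y : X) : Prop :=
  forall delta, 0 < delta -> sim_Cd C delta x y.

(* D is an element of D(C): an equivalence class of ~_C on C *)
Definition D_class (C D : X -> Prop) : Prop :=
  exists x0, C x0 /\ forall y, D y <-> (C y /\ sim_C C x0 y).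

Definition D_delta (C D : X -> Prop) (delta : R) (y : X) : Prop :=
  C y /\ exists x0, D x0 /\ sim_Cd C delta x0 y.

(* lim_i d(f^i(x), A_i) = 0, with d(p,A) = inf_{a in A} d(p,a) *)
Definition dist_to_seq_sets_zero (x : X) (A : nat -> X -> Prop) : Prop :=
  forall e, 0 < e -> exists N, forall i, (N <= i)%nat ->
    exists y, A i y /\ d (iter i x) y < e.

Definition Ws (C : X -> Prop) (x : X) : Prop :=
  dist_to_seq_sets_zero x (fun _ => C).

Definition image_iter (i : nat) (A : X -> Prop) (y : X) : Prop :=
  exists a, A a /\ y = iter i a.

Definition Vs (C D : X -> Prop) (x : X) : Prop :=
  forall delta, 0 < delta ->
    Ws C x /\ dist_to_seq_sets_zero x (fun i => image_iter i (D_delta C D delta)).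

Definition s_limit_shadowing : Prop :=
  forall eps, 0 < eps -> exists delta, 0 < delta /\
    forall xs : nat -> X,
      (forall i, d (f (xs i)) (xs (S i)) <= delta) ->
      (forall e, 0 < e -> exists N, forall i, (N <= i)%nat -> d (f (xs i)) (xs (S i)) < e) ->
      exists x, (forall i, d (iter i x) (xs i) <= eps) /\
        (forall e, 0 < e -> exists N, forall i, (N <= i)%nat -> d (iter i x) (xs i) < e).

Definition S_set (n : nat) (x : nat -> X) (r : R) (i : nat) : Prop :=
  forall j k, (j < k)%nat -> (k < n)%nat -> d (iter i (x j)) (iter i (x k)) > r.

Definition T_set (n : nat) (x : nat -> X) (r : R) (i : nat) : Prop :=
  forall j k, (j < k)%nat -> (k < n)%nat -> d (iter i (x j)) (iter i (x k)) < r.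

Definition scrambled (F G : (nat -> Prop) -> Prop) (n : nat) (delta : R) (x : nat -> X) : Prop :=
  F (S_set n x delta) /\ forall e, 0 < e -> G (T_set n x e).

Definition dense_chaotic (F G : (nat -> Prop) -> Prop) (n : nat) (delta : R) (Y : X -> Prop) : Prop :=
  (exists y, Y y) /\
  forall (y : nat -> X) e, (forall j, (j < n)%nat -> Y (y j)) -> 0 < e ->
    exists z, (forall j, (j < n)%nat -> Y (z j)) /\ scrambled F G n delta z /\
      (forall j, (j < n)%nat -> d (z j) (y j) < e).

End Defs.

Definition furstenberg (F : (nat -> Prop) -> Prop) : Prop :=
  (exists A, F A) /\ (exists A, ~ F A) /\
  (forall A B : nat -> Prop, F A -> (forall i, A i -> B i) -> F B).

Definition full_family (F : (nat -> Prop) -> Prop) : Prop :=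
  furstenberg F /\ forall A n, F A -> F (fun i => A i /\ (n <= i)%nat).

(* Main.v *)
Require Import Defs.
From Stdlib Require Import Reals Lra Lia Arith List.
From Stdlib Require Import IndefiniteDescription Classical.
Open Scope R_scope.

Lemma choice_nat {A : Type} (P : nat -> A -> Prop) :
  (forall i, exists a, P i a) -> exists g : nat -> A, forall i, P i (g i).
Proof.
  intros H. exists (fun i => proj1_sig (constructive_indefinite_description _ (H i))).
  intros i. exact (proj2_sig (constructive_indefinite_description _ (H i))).
Qed.

Section Chains.
Context {X : Type} (d : X -> X -> R) (f : X -> X).
Hypothesis Hm : is_metric d.

Lemma d_nn x y : 0 <= d x y. Proof. apply Hm. Qed.
Lemma d_xx x : d x x = 0. Proof. apply Hm. reflexivity. Qed.
Lemma d_sym x y : d x y = d y x. Proof. apply Hm. Qed.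
Lemma d_tri x y z : d x z <= d x y + d y z. Proof. apply Hm. Qed.

Notation CH := (chain_in d f).

Lemma iter_S i x : iter f (S i) x = f (iter f i x).
Proof. reflexivity. Qed.

Lemma chain_mono (A A' : X -> Prop) e e' x k :
  CH A e x k -> e <= e' -> (forall z, A z -> A' z) -> CH A' e' x k.
Proof.
  intros [H1 [H2 H3]] He HA. split; [|split]; auto.
  intros i Hi. specialize (H3 i Hi). lra.
Qed.

Definition cat (x : nat -> X) (k : nat) (y : nat -> X) : nat -> X :=
  fun i => if Nat.leb i k then x i else y (i - k)%nat.

Lemma chain_concat A e x k y l :
  CH A e x k -> CH A e y l -> x k = y O -> CH A e (cat x k y) (k + l).
Proof.
  intros [Hk [Hx Sx]] [Hl [Hy Sy]] E. unfold cat. split; [lia|split].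
  - intros i Hi. destruct (Nat.leb_spec i k).
    + apply Hx; lia.
    + apply Hy; lia.
  - intros i Hi. destruct (Nat.leb_spec i k); destruct (Nat.leb_spec (S i) k).
    + apply Sx; lia.
    + assert (i = k) by lia. subst i. replace (S k - k)%nat with 1%nat by lia.
      rewrite E. apply Sy; lia.
    + lia.
    + replace (S i - k)%nat with (S (i - k)) by lia. apply Sy; lia.
Qed.

Lemma cat_0 x k y : cat x k y O = x O.
Proof. reflexivity. Qed.

Lemma cat_end x k y l : (1 <= l)%nat -> cat x k y (k + l) = y l.
Proof.
  intros Hl. unfold cat. destruct (Nat.leb_spec (k + l) k). lia.
  f_equal; lia.
Qed.

Lemma chain_prefix A e x k i : CH A e x k -> (1 <= i <= k)%nat -> CH A e x i.
Proof.
  intros [Hk [Hx Sx]] Hi. split; [lia|split].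
  - intros j Hj. apply Hx; lia.
  - intros j Hj. apply Sx; lia.
Qed.

Lemma chain_suffix A e x k i : CH A e x k -> (i < k)%nat ->
  CH A e (fun t => x (i + t)%nat) (k - i).
Proof.
  intros [Hk [Hx Sx]] Hi. split; [lia|split].
  - intros j Hj. apply Hx; lia.
  - intros j Hj. replace (i + S j)%nat with (S (i + j)) by lia. apply Sx; lia.
Qed.

Lemma chain_start A e e' x k a : CH A e x k -> A a -> d (f a) (x 1%nat) <= e' -> e <= e' ->
  CH A e' (fun i => if Nat.eqb i 0 then a else x i) k.
Proof.
  intros [Hk [Hx Sx]] Ha Hd He. split; [lia|split].
  - intros j Hj. destruct (Nat.eqb_spec j 0); auto.
  - intros j Hj. destruct (Nat.eqb_spec j 0).
    + subst j. simpl. exact Hd.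
    + simpl. specialize (Sx j Hj). lra.
Qed.

Lemma chain_end A e e' x k b : CH A e x k -> A b -> d (f (x (k - 1)%nat)) b <= e' -> e <= e' ->
  CH A e' (fun i => if Nat.eqb i k then b else x i) k.
Proof.
  intros [Hk [Hx Sx]] Hb Hd He. split; [lia|split].
  - intros j Hj. destruct (Nat.eqb_spec j k); auto.
  - intros j Hj. destruct (Nat.eqb_spec j k); [lia|].
    destruct (Nat.eqb_spec (S j) k).
    + replace j with (k - 1)%nat by lia. exact Hd.
    + specialize (Sx j Hj). lra.
Qed.

Lemma chain_orbit A e a k : (1 <= k)%nat -> (forall i, (i <= k)%nat -> A (iter f i a)) -> 0 <= e ->
  CH A e (fun i => iter f i a) k.
Proof.
  intros Hk HA He. split; [lia|split]; auto.
  intros i Hi. rewrite iter_S, d_xx. exact He.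
Qed.

Lemma crel_trans a b c : chain_rel d f a b -> chain_rel d f b c -> chain_rel d f a c.
Proof.
  intros H1 H2 e He. destruct (H1 e He) as [x [k [Hx [E0 Ek]]]].
  destruct (H2 e He) as [y [l [Hy [F0 Fl]]]].
  exists (cat x k y), (k + l)%nat. split; [apply chain_concat; congruence|].
  split; [rewrite cat_0; auto|]. rewrite cat_end; [auto|apply Hy].
Qed.

Lemma crel_f a : chain_rel d f a (f a).
Proof.
  intros e He. exists (fun i => iter f i a), 1%nat. split; [|split; reflexivity].
  apply chain_orbit; [lia|intros; exact I|lra].
Qed.

Hypothesis Hcont : continuous_map d f.

Lemma crel_fback a b : chain_rel d f b a -> CR d f a -> chain_rel d f (f b) a.
Proof.
  intros H1 H2 e He.
  destruct (Hcont (f b) (e/2)) as [r [Hr Hrc]]; [lra|].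
  set (e' := Rmin (e/2) (r/2)).
  assert (He' : 0 < e') by (unfold e'; apply Rmin_pos; lra).
  destruct (H1 e' He') as [x [k [Hx [E0 Ek]]]].
  destruct (H2 e' He') as [y [l [Hy [F0 Fl]]]].
  assert (Hc : CH allX e' (cat x k y) (k + l)) by (apply chain_concat; congruence).
  assert (Hk1 := proj1 Hx). assert (Hl1 := proj1 Hy).
  assert (Hs := chain_suffix _ _ _ _ 1 Hc ltac:(lia)).
  set (z := fun t => cat x k y (1 + t)%nat) in Hs.
  assert (Hst := chain_start _ _ e _ _ (f b) Hs I).
  exists (fun i => if Nat.eqb i 0 then f b else z i), (k + l - 1)%nat.
  split; [|split; [reflexivity|]].
  - apply Hst; [|unfold e'; pose proof (Rmin_l (e/2) (r/2)); lra].
    assert (Hz0 : d (f (z 0%nat)) (z 1%nat) <= e').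
    { destruct Hs as [_ [_ S]]. apply S. lia. }
    assert (Hb : d (f b) (z 0%nat) < r).
    { assert (Ez : z 0%nat = x 1%nat) by (unfold z, cat; simpl; destruct k; [lia|reflexivity]).
      rewrite Ez. destruct Hx as [_ [_ Sx]]. specialize (Sx 0%nat ltac:(lia)). rewrite E0 in Sx.
      unfold e' in Sx. pose proof (Rmin_r (e/2) (r/2)). lra. }
    specialize (Hrc _ Hb).
    pose proof (d_tri (f (f b)) (f (z 0%nat)) (z 1%nat)) as T.
    assert (e' <= e/2) by (unfold e'; apply Rmin_l). lra.
  - destruct (Nat.eqb_spec (k + l - 1) 0); [lia|].
    unfold z. replace (1 + (k + l - 1))%nat with (k + l)%nat by lia.
    rewrite cat_end; auto.
Qed.


Hypothesis Hcomp : compact_space d.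
Variable C : X -> Prop.
Variable x0 : X.
Hypothesis HCdef : forall y, C y <-> chain_equiv d f x0 y.


Lemma C_rel x y : C x -> C y -> chain_rel d f x y.
Proof.
  intros Hx Hy. apply HCdef in Hx. apply HCdef in Hy.
  destruct Hx as [_ [_ [_ A]]]. destruct Hy as [_ [_ [B _]]].
  exact (crel_trans _ _ _ A B).
Qed.

Lemma C_of_rel x w : C x -> chain_rel d f x w -> chain_rel d f w x -> C w.
Proof.
  intros Hx H1 H2. pose proof Hx as Hx'. apply HCdef in Hx.
  destruct Hx as [Ha [Hb [Hc Hd]]]. apply HCdef.
  split; [auto|split; [|split]].
  - exact (crel_trans _ _ _ H2 H1).
  - exact (crel_trans _ _ _ Hc H1).
  - exact (crel_trans _ _ _ H2 Hd).
Qed.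

Lemma C_inv x : C x -> C (f x).
Proof.
  intros Hx. apply (C_of_rel x); auto.
  - apply crel_f.
  - apply crel_fback. apply HCdef in Hx. apply Hx. apply HCdef in Hx. apply Hx.
Qed.

Lemma C_iter i x : C x -> C (iter f i x).
Proof.
  intros Hx. induction i; auto. rewrite iter_S. apply C_inv; auto.
Qed.

Lemma open_ball (P : Prop) (c : X) (r : R) : Defs.open_set d (fun y => P /\ d c y < r).
Proof.
  intros y [HP Hy]. exists (r - d c y). split; [lra|].
  intros z Hz. split; auto. pose proof (d_tri c y z). lra.
Qed.

Lemma fold_max_ge {I : Type} (g : I -> nat) (l : list I) i :
  In i l -> (g i <= fold_right (fun j acc => Nat.max (g j) acc) 0 l)%nat.
Proof.
  induction l as [|a l IH]; simpl; [tauto|].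
  intros [<-|H]; [lia|]. specialize (IH H). lia.
Qed.

Lemma cluster (w : nat -> X) :
  exists c, forall r, 0 < r -> forall K, exists k, (K <= k)%nat /\ d (w k) c < r.
Proof.
  apply NNPP. intros Hn.
  assert (H : forall c, exists r K, 0 < r /\ forall k, (K <= k)%nat -> r <= d (w k) c).
  { intros c. apply NNPP. intros H. apply Hn. exists c. intros r Hr K.
    apply NNPP. intros H'. apply H. exists r, K. split; auto.
    intros k Hk. apply Rnot_lt_le. intros Hlt. apply H'. exists k. auto. }
  destruct (Hcomp (X * R * nat)%type
    (fun p y => (0 < snd (fst p) /\ forall k, (snd p <= k)%nat -> snd (fst p) <= d (w k) (fst (fst p)))
              /\ d (fst (fst p)) y < snd (fst p))) as [l Hl].
  - intros [[c r] K]. simpl. apply open_ball.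
  - intros y. destruct (H y) as [r [K [Hr HK]]]. exists (y, r, K). simpl.
    split; [split; auto|]. rewrite d_xx; auto.
  - set (Km := fold_right (fun j acc => Nat.max (snd j) acc) 0%nat l).
    destruct (Hl (w Km)) as [[[c r] K] [Hin [[Hr HK] Hd]]]. simpl in *.
    assert (HKm : (K <= Km)%nat) by (apply (fold_max_ge (@snd _ nat) l (c, r, K)); auto).
    specialize (HK Km HKm). rewrite d_sym in HK. lra.
Qed.

Definition chainE e a b := exists z k, CH allX e z k /\ z O = a /\ z k = b.

Lemma inv_small e : 0 < e -> exists K, forall k, (K <= k)%nat -> / INR (S k) < e.
Proof.
  intros He. destruct (archimed_cor1 e He) as [N [HN HN0]]. exists N. intros k Hk.
  eapply Rle_lt_trans; [|exact HN]. apply Rinv_le_contravar.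
  - apply lt_0_INR. lia.
  - apply le_INR. lia.
Qed.

Lemma inv_pos k : 0 < / INR (S k).
Proof. apply Rinv_0_lt_compat, lt_0_INR. lia. Qed.

Lemma near_claim x (Cx : C x) dl (Hdl : 0 < dl) :
  exists eps, 0 < eps /\ forall w, chainE eps x w -> chainE eps w x ->
    exists c, C c /\ d c w < dl /\ d (f c) (f w) < dl.
Proof.
  apply NNPP. intros Hn.
  assert (Hs : forall k : nat, exists w, chainE (/ INR (S k)) x w /\ chainE (/ INR (S k)) w x /\
     ~ exists c, C c /\ d c w < dl /\ d (f c) (f w) < dl).
  { intros k. apply NNPP. intros H. apply Hn. exists (/ INR (S k)). split; [apply inv_pos|].
    intros w H1 H2. apply NNPP. intros H3. apply H. exists w. auto. }
  destruct (choice_nat _ Hs) as [w Hw].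
  destruct (cluster w) as [cs Hc].
  assert (R1 : chain_rel d f x cs).
  { intros e He. destruct (inv_small (e/2)) as [K HK]; [lra|].
    destruct (Hc (e/2) ltac:(lra) K) as [k [Hk Hdk]].
    destruct (Hw k) as [[z [m [Hz [Z0 Zm]]]] _].
    assert (Hm1 := proj1 Hz).
    exists (fun i => if Nat.eqb i m then cs else z i), m. split; [|split].
    - apply (chain_end _ (/ INR (S k))); auto; [exact I| |].
      + destruct Hz as [_ [_ Sz]]. specialize (Sz (m-1)%nat ltac:(lia)).
        replace (S (m-1)) with m in Sz by lia. rewrite Zm in Sz.
        pose proof (d_tri (f (z (m-1)%nat)) (w k) cs). specialize (HK k Hk). lra.
      + specialize (HK k Hk). lra.
    - destruct (Nat.eqb_spec 0 m); [lia|auto].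
    - rewrite Nat.eqb_refl. auto. }
  assert (R2 : chain_rel d f cs x).
  { intros e He. destruct (Hcont cs (e/2)) as [rho [Hrho Hrc]]; [lra|].
    destruct (inv_small (e/2)) as [K HK]; [lra|].
    destruct (Hc rho Hrho K) as [k [Hk Hdk]].
    destruct (Hw k) as [_ [[z [m [Hz [Z0 Zm]]]] _]].
    assert (Hm1 := proj1 Hz).
    exists (fun i => if Nat.eqb i 0 then cs else z i), m. split; [|split].
    - apply (chain_start _ (/ INR (S k))); auto; [exact I| |].
      + destruct Hz as [_ [_ Sz]]. specialize (Sz 0%nat ltac:(lia)). rewrite Z0 in Sz.
        rewrite d_sym in Hdk. specialize (Hrc _ Hdk).
        pose proof (d_tri (f cs) (f (w k)) (z 1%nat)). specialize (HK k Hk). lra.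
      + specialize (HK k Hk). lra.
    - reflexivity.
    - destruct (Nat.eqb_spec m 0); [lia|auto]. }
  assert (Ccs : C cs) by (apply (C_of_rel x); auto).
  destruct (Hcont cs dl Hdl) as [rho [Hrho Hrc]].
  destruct (Hc (Rmin rho dl) ltac:(apply Rmin_pos; lra) 0%nat) as [k [_ Hdk]].
  destruct (Hw k) as [_ [_ Hno]]. apply Hno. exists cs. rewrite d_sym in Hdk.
  pose proof (Rmin_l rho dl). pose proof (Rmin_r rho dl).
  split; auto. split; [lra|]. apply Hrc. lra.
Qed.

Lemma ict x y dl : C x -> C y -> 0 < dl -> exists z k, CH C dl z k /\ z O = x /\ z k = y.
Proof.
  intros Cx Cy Hdl.
  destruct (near_claim x Cx (dl/4)) as [eps [Heps Hcl]]; [lra|].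
  set (e' := Rmin eps (dl/4)).
  assert (He' : 0 < e') by (apply Rmin_pos; lra).
  assert (e'1 : e' <= eps) by apply Rmin_l.
  assert (e'2 : e' <= dl/4) by apply Rmin_r.
  destruct (C_rel x y Cx Cy e' He') as [z [k [Hz [Z0 Zk]]]].
  destruct (C_rel y x Cy Cx eps Heps) as [u [l [Hu [U0 Ul]]]].
  assert (Hk1 := proj1 Hz). assert (Hl1 := proj1 Hu).
  assert (Sp : forall i, exists c, (i <= k)%nat ->
     C c /\ d c (z i) <= dl/4 /\ d (f c) (f (z i)) <= dl/4).
  { intros i. destruct (Nat.eqb_spec i 0).
    { exists x. intros _. subst i. rewrite Z0, !d_xx. split; auto; lra. }
    destruct (Nat.eqb_spec i k).
    { exists y. intros _. subst i. rewrite Zk, !d_xx. split; auto; lra. }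
    destruct (le_lt_dec i k) as [Hik|Hik]; [|exists x; intros; lia].
    destruct (Hcl (z i)) as [c [Cc [D1 D2]]].
    - exists z, i. split; [|split; auto].
      apply (chain_mono allX allX e'); auto. apply (chain_prefix _ _ _ k); auto; lia.
    - assert (Hs := chain_suffix _ _ _ _ i Hz ltac:(lia)).
      assert (Hs' : CH allX eps (fun t => z (i + t)%nat) (k - i)) by
        (apply (chain_mono allX allX e'); auto).
      exists (cat (fun t => z (i + t)%nat) (k - i) u), (k - i + l)%nat.
      split; [apply chain_concat; auto; replace (i + (k - i))%nat with k by lia; congruence|].
      split; [rewrite cat_0; f_equal; lia|]. rewrite cat_end; auto.
    - exists c. intros _. split; auto. lra. }
  destruct (choice_nat _ Sp) as [cc Hcc].
  set (z' := fun i => if Nat.eqb i 0 then x else if Nat.eqb i k then y else cc i).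
  assert (Hz' : forall i, (i <= k)%nat ->
     C (z' i) /\ d (z' i) (z i) <= dl/4 /\ d (f (z' i)) (f (z i)) <= dl/4).
  { intros i Hi. unfold z'. destruct (Nat.eqb_spec i 0).
    { subst i. rewrite Z0, !d_xx. split; auto; lra. }
    destruct (Nat.eqb_spec i k).
    { subst i. rewrite Zk, !d_xx. split; auto; lra. }
    auto. }
  exists z', k. split; [split; [lia|split]|split].
  - intros i Hi. apply Hz'; auto.
  - intros i Hi. destruct (Hz' i ltac:(lia)) as [_ [_ A1]].
    destruct (Hz' (S i) ltac:(lia)) as [_ [A2 _]].
    destruct Hz as [_ [_ Sz]]. specialize (Sz i Hi).
    pose proof (d_tri (f (z' i)) (f (z i)) (z' (S i))).
    pose proof (d_tri (f (z i)) (z (S i)) (z' (S i))).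
    rewrite (d_sym (z (S i))) in H0. lra.
  - reflexivity.
  - unfold z'. destruct (Nat.eqb_spec k 0); [lia|]. rewrite Nat.eqb_refl. reflexivity.
Qed.

Definition Good p dl q rho L := forall u, C u -> d q u < rho ->
  (exists z k, CH C dl z k /\ z O = p /\ z k = u /\ (k <= L)%nat) /\
  (exists z k, CH C dl z k /\ z O = u /\ z k = p /\ (k <= L)%nat).

Lemma unif p dl : C p -> 0 < dl -> exists L, forall u, C u ->
  (exists z k, CH C dl z k /\ z O = p /\ z k = u /\ (k <= L)%nat) /\
  (exists z k, CH C dl z k /\ z O = u /\ z k = p /\ (k <= L)%nat).
Proof.
  intros Cp Hdl.
  destruct (Hcomp (X * R * nat)%type
    (fun i y => (0 < snd (fst i) /\ Good p dl (fst (fst i)) (snd (fst i)) (snd i))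
              /\ d (fst (fst i)) y < snd (fst i))) as [l Hl].
  - intros [[q rho] L]. simpl. apply open_ball.
  - intros y. destruct (Hcont y (dl/3)) as [r0 [Hr0 Hrc]]; [lra|].
    set (rho := Rmin r0 (dl/3)).
    assert (Hrho : 0 < rho) by (apply Rmin_pos; lra).
    assert (rho1 : rho <= r0) by apply Rmin_l.
    assert (rho2 : rho <= dl/3) by apply Rmin_r.
    destruct (classic (exists c, C c /\ d y c < rho)) as [[c [Cc Hc]]|Hno].
    + destruct (ict c p (dl/3) Cc Cp ltac:(lra)) as [z1 [k1 [H1 [A1 B1]]]].
      destruct (ict p c (dl/3) Cp Cc ltac:(lra)) as [z2 [k2 [H2 [A2 B2]]]].
      assert (K1 := proj1 H1). assert (K2 := proj1 H2).
      exists (y, rho, Nat.max k1 k2). simpl. split; [split; auto|rewrite d_xx; auto].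
      intros u Cu Hu. split.
      * exists (fun i => if Nat.eqb i k2 then u else z2 i), k2.
        split; [|split; [destruct (Nat.eqb_spec 0 k2); [lia|auto]|split; [rewrite Nat.eqb_refl; auto|lia]]].
        apply (chain_end _ (dl/3)); auto; [|lra].
        destruct H2 as [_ [_ S2]]. specialize (S2 (k2-1)%nat ltac:(lia)).
        replace (S (k2-1)) with k2 in S2 by lia. rewrite B2 in S2.
        pose proof (d_tri (f (z2 (k2-1)%nat)) c u) as T1. pose proof (d_tri c y u) as T2.
        rewrite (d_sym c y) in T2. lra.
      * exists (fun i => if Nat.eqb i 0 then u else z1 i), k1.
        split; [|split; [auto|split; [destruct (Nat.eqb_spec k1 0); [lia|auto]|lia]]].
        apply (chain_start _ (dl/3)); auto; [|lra].
        destruct H1 as [_ [_ S1]]. specialize (S1 0%nat ltac:(lia)). rewrite A1 in S1.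
        assert (E1 := Hrc u ltac:(lra)). assert (E2 := Hrc c ltac:(lra)).
        pose proof (d_tri (f u) (f c) (z1 1%nat)) as T1. pose proof (d_tri (f u) (f y) (f c)) as T2.
        rewrite (d_sym (f u) (f y)) in T2. lra.
    + exists (y, rho, 0%nat). simpl. split; [split; auto|rewrite d_xx; auto].
      intros u Cu Hu. exfalso. apply Hno. exists u. auto.
  - exists (fold_right (fun j acc => Nat.max (snd j) acc) 0%nat l).
    intros u Cu. destruct (Hl u) as [[[q rho] L] [Hin [[_ HG] Hd]]]. simpl in *.
    assert (HL : (L <= fold_right (fun j acc => Nat.max (snd j) acc) 0%nat l)%nat)
      by (apply (fold_max_ge (@snd _ nat) l (q, rho, L)); auto).
    destruct (HG u Cu Hd) as [[z [k [A [B [E F]]]]] [z' [k' [A' [B' [E' F']]]]]].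
    split; [exists z, k; split; [exact A|split; [exact B|split; [exact E|lia]]]
           |exists z', k'; split; [exact A'|split; [exact B'|split; [exact E'|lia]]]].
Qed.

Section Gcd.
Variable p : X.
Hypothesis Cp : C p.
Variable dl : R.
Hypothesis Hdl : 0 < dl.
Variable m : nat.
Hypothesis Hgcd : is_gcd_set (cycle_length d f C dl) m.

Definition Sp k := exists z, CH C dl z k /\ z O = p /\ z k = p.

Lemma Sp_div k : Sp k -> Nat.divide m k.
Proof. intros [z [Hz [A B]]]. apply (proj1 Hgcd). exists z. split; auto. congruence. Qed.

Lemma Sp_pos k : Sp k -> (1 <= k)%nat.
Proof. intros [z [Hz _]]. apply Hz. Qed.

Lemma Sp_add a b : Sp a -> Sp b -> Sp (a + b).
Proof.
  intros [z [Hz [A B]]] [y [Hy [A' B']]]. exists (cat z a y).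
  split; [apply chain_concat; congruence|]. split; [rewrite cat_0; auto|].
  rewrite cat_end; auto. apply Hy.
Qed.

Lemma Sp_gcd g : (forall k, Sp k -> Nat.divide g k) -> Nat.divide g m.
Proof.
  intros Hg. apply (proj2 Hgcd). intros k [x [Hx E]].
  assert (Cq : C (x O)) by (apply Hx; lia).
  destruct (ict p (x O) dl Cp Cq Hdl) as [z1 [a [H1 [A1 B1]]]].
  destruct (ict (x O) p dl Cq Cp Hdl) as [z2 [b [H2 [A2 B2]]]].
  assert (S1 : Sp (a + b)).
  { exists (cat z1 a z2). split; [apply chain_concat; congruence|].
    split; [rewrite cat_0; auto|rewrite cat_end; auto; apply H2]. }
  assert (S2 : Sp (a + (k + b))).
  { exists (cat z1 a (cat x k z2)). split.
    - apply chain_concat; [exact H1| |].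
      + apply chain_concat; [exact Hx|exact H2|congruence].
      + rewrite cat_0. congruence.
    - split; [rewrite cat_0; auto|]. rewrite cat_end; [|pose proof (proj1 H2); lia].
      rewrite cat_end; auto; apply H2. }
  apply Hg in S1. apply Hg in S2.
  replace (a + (k + b))%nat with (a + b + k)%nat in S2 by lia.
  exact (Nat.divide_add_cancel_r _ _ _ S1 S2).
Qed.

Lemma Sp_mul c k : Sp k -> (1 <= c)%nat -> Sp (c * k).
Proof.
  intros Hk Hc. induction c as [|c IH]; [lia|].
  destruct c as [|c]; [simpl; rewrite Nat.add_0_r; auto|].
  replace (S (S c) * k)%nat with (k + S c * k)%nat by lia. apply Sp_add; auto. apply IH. lia.
Qed.

Definition S0 k := k = O \/ Sp k.

Lemma S0_add a b : S0 a -> S0 b -> S0 (a + b).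
Proof.
  intros [->|Ha] [->|Hb]; [left; lia|right; auto|right; rewrite Nat.add_0_r; auto|right; apply Sp_add; auto].
Qed.

Lemma S0_mul c k : S0 k -> S0 (c * k).
Proof.
  intros [->|Hk]; [left; lia|]. destruct c; [left; lia|]. right. apply Sp_mul; auto; lia.
Qed.

Lemma schur_step : forall g, (0 < g)%nat -> Nat.divide m g ->
  (exists P Q, S0 P /\ S0 Q /\ P = (Q + g)%nat) ->
  exists P Q, S0 P /\ S0 Q /\ P = (Q + m)%nat.
Proof.
  intros g. induction g as [g IH] using (well_founded_induction lt_wf).
  intros Hg Hmg [P [Q [SP [SQ E]]]].
  destruct (classic (forall k, Sp k -> Nat.divide g k)) as [Hall|Hnot].
  - assert (g = m) by (apply Nat.divide_antisym; auto; apply Sp_gcd; auto).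
    subst g. exists P, Q. auto.
  - apply not_all_ex_not in Hnot. destruct Hnot as [k Hk].
    apply imply_to_and in Hk. destruct Hk as [Sk Ndk].
    set (g' := Nat.gcd g k).
    destruct (Nat.gcd_bezout_pos g k Hg) as [a [b Hab]]. fold g' in Hab.
    assert (D1 : Nat.divide g' g) by apply Nat.gcd_divide_l.
    assert (D2 : Nat.divide g' k) by apply Nat.gcd_divide_r.
    assert (Hle : (g' <= g)%nat) by (apply Nat.divide_pos_le; auto).
    assert (Hne : g' <> g) by (intros Heq; apply Ndk; rewrite <- Heq; auto).
    assert (Hpos : (0 < g')%nat).
    { destruct (Nat.eq_dec g' 0) as [H0|H0]; [|lia].
      apply Nat.gcd_eq_0_l in H0. lia. }
    assert (Hm' : Nat.divide m g') by (apply Nat.gcd_greatest; auto; apply Sp_div; auto).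
    apply (IH g'); auto; [lia|].
    exists (a * P)%nat, (a * Q + b * k)%nat. split; [apply S0_mul; auto|].
    split; [apply S0_add; apply S0_mul; auto; right; auto|].
    subst P. rewrite Nat.mul_add_distr_l. lia.
Qed.

Lemma schur : exists T0, (1 <= T0)%nat /\ forall T, (T0 <= T)%nat -> Nat.divide m T -> Sp T.
Proof.
  destruct (ict p p dl Cp Cp Hdl) as [z [s0 [Hz [A B]]]].
  assert (Ss : Sp s0) by (exists z; auto).
  assert (Hs1 := Sp_pos _ Ss).
  assert (Hms := Sp_div _ Ss).
  assert (Hm0 : (0 < m)%nat).
  { destruct m as [|m']; [|lia]. destruct Hms as [t Ht]. lia. }
  destruct (schur_step s0 ltac:(lia) Hms) as [P [Q [SP [SQ E]]]].
  { exists s0, 0%nat. split; [right; auto|split; [left; auto|lia]]. }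
  destruct SQ as [HQ|SQ].
  - subst Q. simpl in E. subst P. destruct SP as [SP|SP]; [lia|].
    exists m. split; [lia|]. intros T HT [t Ht]. subst T. apply Sp_mul; auto. nia.
  - destruct (Sp_div _ SQ) as [q Hq].
    assert (Hq1 : (1 <= q)%nat) by (pose proof (Sp_pos _ SQ); nia).
    assert (SP' : Sp P) by (destruct SP as [SP|SP]; auto; lia).
    exists (q * q * m)%nat. split; [nia|]. intros T HT [t Ht]. subst T.
    assert (Htq : (q * q <= t)%nat) by nia.
    set (a := (t / q)%nat). set (b := (t mod q)%nat).
    assert (Eab : t = (q * a + b)%nat) by (apply Nat.div_mod; lia).
    assert (Hb : (b < q)%nat) by (apply Nat.mod_upper_bound; lia).
    assert (Hab : (b < a)%nat) by nia.
    destruct (Nat.le_exists_sub (S b) a ltac:(lia)) as [c [Hc _]].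
    assert (ET : (t * m = (S c) * Q + b * P)%nat).
    { rewrite E, Hq, Eab, Hc. ring. }
    rewrite ET. rewrite Nat.add_comm.
    destruct (S0_mul b P (or_intror SP')) as [H0|H0].
    + rewrite H0, Nat.add_0_l. apply Sp_mul; auto; lia.
    + apply Sp_add; auto. apply Sp_mul; auto; lia.
Qed.

End Gcd.

Lemma gcd_unique S m1 m2 : is_gcd_set S m1 -> is_gcd_set S m2 -> m1 = m2.
Proof.
  intros [A1 B1] [A2 B2]. apply Nat.divide_antisym; [apply B2; auto|apply B1; auto].
Qed.

Variable D : X -> Prop.
Variable p : X.
Hypothesis Cp : C p.
Hypothesis HDdef : forall y, D y <-> C y /\ sim_C d f C p y.

Lemma Dd_chain b dl : 0 < dl -> D_delta d f C D dl b ->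
  exists m, is_gcd_set (cycle_length d f C dl) m /\
  exists z k, CH C dl z k /\ z O = p /\ z k = b /\ Nat.divide m k.
Proof.
  intros Hdl [Cb [x1 [Dx1 [m2 [G2 [z2 [k2 [H2 [A2 [B2 M2]]]]]]]]]].
  apply HDdef in Dx1. destruct Dx1 as [Cx1 Hs].
  destruct (Hs dl Hdl) as [m1 [G1 [z1 [k1 [H1 [A1 [B1 M1]]]]]]].
  assert (m1 = m2) by (apply (gcd_unique _ _ _ G1 G2)). subst m2.
  exists m1. split; auto. exists (cat z1 k1 z2), (k1 + k2)%nat.
  split; [apply chain_concat; congruence|]. split; [rewrite cat_0; auto|].
  split; [rewrite cat_end; auto; apply H2|]. apply Nat.divide_add_r; auto.
Qed.



Hypothesis Hshadow : s_limit_shadowing d f.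

Lemma orbit_cycle dl k z b N l w : 0 < dl -> CH C dl z k -> z O = p -> z k = b -> C b -> (1 <= N)%nat ->
  CH C dl w l -> w O = iter f N b -> w l = p -> Sp p dl (k + (N + l)).
Proof.
  intros Hdl Hz A B Cb HN Hw A' B'.
  assert (Ho : CH C dl (fun i => iter f i b) N).
  { apply chain_orbit; [lia|intros; apply C_iter; auto|lra]. }
  exists (cat z k (cat (fun i => iter f i b) N w)). split.
  - apply chain_concat; [exact Hz| |].
    + apply chain_concat; [exact Ho|exact Hw|congruence].
    + rewrite cat_0. simpl. congruence.
  - split; [rewrite cat_0; auto|]. rewrite cat_end; [|pose proof (proj1 Hw); lia].
    rewrite cat_end; auto. apply Hw.
Qed.

Lemma bridge u v e : Vs d f C D u -> Vs d f C D v -> 0 < e ->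
  exists z, d z u < e /\ forall eta, 0 < eta -> exists N, forall i, (N <= i)%nat ->
    d (iter f i z) (iter f i v) < eta.
Proof.
  intros Vu Vv He.
  destruct (Hshadow (e/2)) as [d1 [Hd1 Hsh]]; [lra|].
  set (dl := d1/2). assert (Hdl : 0 < dl) by (unfold dl; lra).
  destruct (Vu dl Hdl) as [_ Hu]. destruct (Hu d1 Hd1) as [Nu HNu].
  set (N := S Nu).
  destruct (HNu N ltac:(unfold N; lia)) as [yb [[b [Db Eb]] Hdb]]. subst yb.
  destruct (Dd_chain b dl Hdl Db) as [m [Hg [z0 [k0 [Hz0 [A0 [B0 M0]]]]]]].
  destruct (unif p dl Cp Hdl) as [L HL].
  destruct (schur p Cp dl Hdl m Hg) as [T0 [HT0 HS]].
  destruct (Vv dl Hdl) as [_ Hv]. destruct (Hv dl Hdl) as [Nv HNv].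
  set (M := (N + Nv + L + L + T0)%nat).
  destruct (HNv M ltac:(unfold M; lia)) as [yc [[c [Dc Ec]] Hdc]]. subst yc.
  destruct (Dd_chain c dl Hdl Dc) as [m' [Hg' [z0' [k0' [Hz0' [A0' [B0' M0']]]]]]].
  assert (m' = m) by (apply (gcd_unique _ _ _ Hg' Hg)). subst m'.
  assert (Cb : C b) by apply Db. assert (Cc : C c) by apply Dc.
  destruct (HL (iter f N b) (C_iter N b Cb)) as [_ [w1 [l1 [Hw1 [A1 [B1 L1]]]]]].
  destruct (HL (iter f M c) (C_iter M c Cc)) as [[w2 [l2 [Hw2 [A2 [B2 L2]]]]] [w3 [l3 [Hw3 [A3 [B3 L3]]]]]].
  assert (D1 : Nat.divide m (N + l1)).
  { apply (Nat.divide_add_cancel_r _ k0); auto.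
    apply (Sp_div p dl m Hg). apply (orbit_cycle dl k0 z0 b N l1 w1); auto. unfold N; lia. }
  assert (D2 : Nat.divide m (M + l3)).
  { apply (Nat.divide_add_cancel_r _ k0'); auto.
    apply (Sp_div p dl m Hg). apply (orbit_cycle dl k0' z0' c M l3 w3); auto. unfold M, N; lia. }
  assert (D3 : Nat.divide m (l2 + l3)).
  { apply (Sp_div p dl m Hg). exists (cat w2 l2 w3). split; [apply chain_concat; congruence|].
    split; [rewrite cat_0; auto|rewrite cat_end; auto; apply Hw3]. }
  set (pad := (M - N - l1 - l2)%nat).
  assert (Dp : Nat.divide m pad).
  { apply (Nat.divide_add_cancel_r _ ((N + l1) + (l2 + l3))%nat); [apply Nat.divide_add_r; auto|].
    replace (N + l1 + (l2 + l3) + pad)%nat with (M + l3)%nat by (unfold pad, M in *; lia). auto. }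
  destruct (HS pad ltac:(unfold pad, M in *; lia) Dp) as [w4 [Hw4 [A4 B4]]].
  set (W := cat w1 l1 (cat w4 pad w2)).
  assert (HW : CH C dl W (M - N)).
  { replace (M - N)%nat with (l1 + (pad + l2))%nat by (unfold pad, M in *; lia).
    apply chain_concat; [exact Hw1| |].
    - apply chain_concat; [exact Hw4|exact Hw2|congruence].
    - rewrite cat_0. congruence. }
  assert (W0 : W O = iter f N b) by (unfold W; rewrite cat_0; auto).
  assert (WE : W (M - N)%nat = iter f M c).
  { unfold W. replace (M - N)%nat with (l1 + (pad + l2))%nat by (unfold pad, M in *; lia).
    rewrite cat_end; [|pose proof (proj1 Hw2); lia]. rewrite cat_end; auto. apply Hw2. }
  assert (HNM : (N < M)%nat) by (unfold M, pad in *; pose proof (proj1 Hw2); lia).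
  set (xs := fun i => if Nat.ltb i N then iter f i u else if Nat.ltb i M then W (i - N)%nat else iter f i v).
  assert (P1 : forall i, d (f (xs i)) (xs (S i)) <= d1).
  { intros i. unfold xs.
    destruct (Nat.ltb_spec i N); destruct (Nat.ltb_spec (S i) N).
    - rewrite <- iter_S, d_xx. lra.
    - destruct (Nat.ltb_spec (S i) M); [|lia].
      replace (S i - N)%nat with 0%nat by lia. rewrite W0, <- iter_S.
      replace (S i) with N by lia. lra.
    - lia.
    - destruct (Nat.ltb_spec i M); destruct (Nat.ltb_spec (S i) M).
      + replace (S i - N)%nat with (S (i - N)) by lia.
        destruct HW as [_ [_ SW]]. specialize (SW (i - N)%nat ltac:(lia)). unfold dl in SW. lra.
      + assert (Hi : S (i - N) = (M - N)%nat) by lia.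
        destruct HW as [_ [_ SW]]. specialize (SW (i - N)%nat ltac:(lia)). rewrite Hi, WE in SW.
        replace (S i) with M by lia.
        pose proof (d_tri (f (W (i - N)%nat)) (iter f M c) (iter f M v)) as T.
        rewrite (d_sym (iter f M c)) in T. unfold dl in *. lra.
      + lia.
      + rewrite <- iter_S, d_xx. lra. }
  assert (P2 : forall e0, 0 < e0 -> exists N0, forall i, (N0 <= i)%nat -> d (f (xs i)) (xs (S i)) < e0).
  { intros e0 He0. exists M. intros i Hi. unfold xs.
    destruct (Nat.ltb_spec i N); [lia|]. destruct (Nat.ltb_spec (S i) N); [lia|].
    destruct (Nat.ltb_spec i M); [lia|]. destruct (Nat.ltb_spec (S i) M); [lia|].
    rewrite <- iter_S, d_xx. lra. }
  destruct (Hsh xs P1 P2) as [z [Hz1 Hz2]].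
  exists z. split.
  - specialize (Hz1 0%nat). unfold xs in Hz1. simpl in Hz1.
    destruct (Nat.ltb_spec 0 N); [|unfold N in *; lia]. simpl in Hz1. lra.
  - intros eta Heta. destruct (Hz2 eta Heta) as [N' HN']. exists (Nat.max N' M).
    intros i Hi. specialize (HN' i ltac:(lia)). unfold xs in HN'.
    destruct (Nat.ltb_spec i N); [lia|]. destruct (Nat.ltb_spec i M); [lia|]. exact HN'.
Qed.

End Chains.

Definition asym {X : Type} (d : X -> X -> R) (f : X -> X) (z x : X) :=
  forall eta, 0 < eta -> exists N, forall i, (N <= i)%nat -> d (iter f i z) (iter f i x) < eta.

Section Final.
Context {X : Type} (d : X -> X -> R) (f : X -> X).
Hypothesis Hm : is_metric d.

Lemma dist_asym x z A : dist_to_seq_sets_zero d f x A -> asym d f z x -> dist_to_seq_sets_zero d f z A.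
Proof.
  intros H1 H2 e He. destruct (H1 (e/2) ltac:(lra)) as [N1 HN1].
  destruct (H2 (e/2) ltac:(lra)) as [N2 HN2]. exists (Nat.max N1 N2). intros i Hi.
  destruct (HN1 i ltac:(lia)) as [y [Ay Dy]]. exists y. split; auto.
  specialize (HN2 i ltac:(lia)).
  pose proof (d_tri d Hm (iter f i z) (iter f i x) y). lra.
Qed.

Lemma Vs_asym C D x z : Vs d f C D x -> asym d f z x -> Vs d f C D z.
Proof.
  intros H1 H2 dl Hdl. destruct (H1 dl Hdl) as [A B]. split; eapply dist_asym; eauto.
Qed.

Lemma asym_unif (z a : nat -> X) n : (forall j, (j < n)%nat -> asym d f (z j) (a j)) ->
  forall eta, 0 < eta -> exists N, forall j i, (j < n)%nat -> (N <= i)%nat ->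
    d (iter f i (z j)) (iter f i (a j)) < eta.
Proof.
  intros H eta Heta. induction n as [|n IH].
  - exists 0%nat. intros; lia.
  - destruct IH as [N1 HN1]; [intros; apply H; lia|].
    destruct (H n ltac:(lia) eta Heta) as [N2 HN2].
    exists (Nat.max N1 N2). intros j i Hj Hi.
    destruct (Nat.eq_dec j n); [subst; apply HN2; lia|]. apply HN1; lia.
Qed.

Lemma scr F G n dl r (a z : nat -> X) : full_family F -> full_family G ->
  scrambled d f F G n dl a -> r < dl -> (forall j, (j < n)%nat -> asym d f (z j) (a j)) ->
  scrambled d f F G n r z.
Proof.
  intros [[_ [_ SF]] FF] [[_ [_ SG]] FG] [Sa Ta] Hr Has. split.
  - destruct (asym_unif z a n Has ((dl - r)/2) ltac:(lra)) as [N HN].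
    apply (SF _ _ (FF _ N Sa)). intros i [Hi Ni] j k Hjk Hk.
    specialize (Hi j k Hjk Hk). assert (A1 := HN j i ltac:(lia) Ni). assert (A2 := HN k i ltac:(lia) Ni).
    pose proof (d_tri d Hm (iter f i (a j)) (iter f i (z j)) (iter f i (a k))) as T1.
    pose proof (d_tri d Hm (iter f i (z j)) (iter f i (z k)) (iter f i (a k))) as T2.
    pose proof (d_sym d Hm (iter f i (a j)) (iter f i (z j))) as E. unfold Rgt in *. lra.
  - intros e He. destruct (asym_unif z a n Has (e/4) ltac:(lra)) as [N HN].
    apply (SG _ _ (FG _ N (Ta (e/2) ltac:(lra)))). intros i [Hi Ni] j k Hjk Hk.
    specialize (Hi j k Hjk Hk). assert (A1 := HN j i ltac:(lia) Ni). assert (A2 := HN k i ltac:(lia) Ni).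
    pose proof (d_tri d Hm (iter f i (z j)) (iter f i (a j)) (iter f i (z k))) as T1.
    pose proof (d_tri d Hm (iter f i (a j)) (iter f i (a k)) (iter f i (z k))) as T2.
    pose proof (d_sym d Hm (iter f i (a k)) (iter f i (z k))) as E. lra.
Qed.
End Final.

Theorem theorem1p2 (X : Type) (d : X -> X -> R) (f : X -> X)
  (Hmetric : is_metric d) (Hcompact : compact_space d)
  (Hcont : continuous_map d f) (Hshadow : s_limit_shadowing d f)
  (C D : X -> Prop) (HC : chain_component d f C) (HD : D_class d f C D)
  (F G : (nat -> Prop) -> Prop) (HF : full_family F) (HG : full_family G)
  (n : nat) (delta : R) (Hn : (2 <= n)%nat) (Hdelta : 0 < delta) :
  (exists a : nat -> X, (forall j, (j < n)%nat -> Vs d f C D (a j)) /\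
     scrambled d f F G n delta a) ->
  forall r, 0 < r -> r < delta -> dense_chaotic d f F G n r (Vs d f C D).
Proof.
  intros [a [Va Sa]] r Hr Hrd.
  destruct HC as [x0 [_ HCdef]]. destruct HD as [p [Cp HDdef]].
  split; [exists (a 0%nat); apply Va; lia|].
  intros y e Hy He.
  assert (Hz : forall j, exists z, (j < n)%nat ->
     Vs d f C D z /\ d z (y j) < e /\ asym d f z (a j)).
  { intros j. destruct (lt_dec j n) as [Hj|Hj]; [|exists (y j); intros; lia].
    destruct (bridge d f Hmetric Hcont Hcompact C x0 HCdef D p Cp HDdef Hshadow
                (y j) (a j) e (Hy j Hj) (Va j Hj) He) as [z [Hz1 Hz2]].
    exists z. intros _. split; [|split; auto].
    apply (Vs_asym d f Hmetric C D (a j)); auto. }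
  destruct (choice_nat _ Hz) as [z Hzz].
  exists z. split; [intros j Hj; apply Hzz; auto|split].
  - apply (scr d f Hmetric F G n delta r a z HF HG Sa Hrd). intros j Hj. apply Hzz; auto.
  - intros j Hj. apply Hzz; auto.
Qed.
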